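(* Let $I$ be a non-degenerate interval and $f:I\to\mathbb{R}$ continuous, and let $D(f)$ be the set of points where $f$ has a derivative (finite or infinite). Then the set $\{(x,f(x)):x\in D(f)\}$ can be covered by countably many symmetrically $1$-monotone sets.
   Context: A metric space $(X,d)$ is symmetrically $1$-monotone if there is a linear order $<$ on $X$ such that $\max(d(x,y),d(y,z))\le d(x,z)$ whenever $x<y<z$. Subsets of $\mathbb{R}^2$ carry the Euclidean metric. *)

(* Defs.v *)
From Stdlib Require Import Reals.
From Coquelicot Require Import Coquelicot.
Open Scope R_scope.

Definition is_interval (I : R -> Prop) : Prop :=
  forall a b c, I a -> I c -> a <= b -> b <= c -> I b.

Definition nondegenerate (I : R -> Prop) : Prop :=
  exists a b, a < b /\ I a /\ I b.

Definition has_derivative_ext (I : R -> Prop) (f : R -> R) (x : R) : Prop :=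
  I x /\ exists l : Rbar,
    filterlim (fun y => (f y - f x) / (y - x))
      (within (fun y => I y /\ y <> x) (locally x)) (Rbar_locally l).

Definition dist2 (p q : R * R) : R :=
  sqrt ((fst p - fst q) ^ 2 + (snd p - snd q) ^ 2).

Definition strict_linear_order_on (S : R * R -> Prop) (lt : R * R -> R * R -> Prop) : Prop :=
  (forall x, S x -> ~ lt x x) /\
  (forall x y z, S x -> S y -> S z -> lt x y -> lt y z -> lt x z) /\
  (forall x y, S x -> S y -> x <> y -> lt x y \/ lt y x).

Definition sym_1_monotone (S : R * R -> Prop) : Prop :=
  exists lt, strict_linear_order_on S lt /\
    forall x y z, S x -> S y -> S z -> lt x y -> lt y z ->
      Rmax (dist2 x y) (dist2 y z) <= dist2 x z.

(* Main.v *)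
Require Import Defs.
From Stdlib Require Import Reals Lra Lia Cantor ZArith.
From Coquelicot Require Import Coquelicot.
Open Scope R_scope.

Definition cond (k : nat) (s : R) : Prop :=
  match k with 0%nat => 0 <= s | 1%nat => s <= 0 | _ => Rabs s <= 1 end.

Definition Sset (I : R -> Prop) (f : R -> R) (k n p q : nat) (pt : R * R) : Prop :=
  exists x, pt = (x, f x) /\ I x /\
    (INR p - INR q) / INR (S n) <= x <= (INR p - INR q + 1) / INR (S n) /\
    forall y, I y -> y <> x -> Rabs (y - x) < 2 / INR (S n) ->
      cond k ((f y - f x) / (y - x)).

Lemma cond_prod k s1 s2 : cond k s1 -> cond k s2 -> 0 <= 1 + s1 * s2.
Proof.
  destruct k as [|[|k]]; simpl; intros H1 H2.
  - nra.
  - nra.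
  - revert H1 H2; unfold Rabs; destruct (Rcase_abs s1); destruct (Rcase_abs s2); intros; nra.
Qed.

Lemma key x y z fx fy fz k :
  x < y -> y < z -> cond k ((fy - fx) / (y - x)) -> cond k ((fz - fy) / (z - y)) ->
  0 <= (y - x) * (z - y) + (fy - fx) * (fz - fy).
Proof.
  intros Hxy Hyz H1 H2.
  set (s1 := (fy - fx) / (y - x)) in *.
  set (s2 := (fz - fy) / (z - y)) in *.
  assert (E1 : fy - fx = s1 * (y - x)) by (unfold s1; field; lra).
  assert (E2 : fz - fy = s2 * (z - y)) by (unfold s2; field; lra).
  rewrite E1, E2.
  replace ((y - x) * (z - y) + s1 * (y - x) * (s2 * (z - y)))
    with (((y - x) * (z - y)) * (1 + s1 * s2)) by ring.
  apply Rmult_le_pos; [nra | exact (cond_prod _ _ _ H1 H2)].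
Qed.

Lemma Sset_mono I f k n p q : sym_1_monotone (Sset I f k n p q).
Proof.
  exists (fun a b => fst a < fst b). split.
  - split; [|split].
    + intros a _; lra.
    + intros a b c _ _ _; simpl; lra.
    + intros a b [x [-> _]] [y [-> _]] Hne; simpl.
      destruct (Rtotal_order x y) as [H|[H|H]]; [left; lra| |right; lra].
      subst; congruence.
  - intros a b c [x [-> [Ix [Bx Cx]]]] [y [-> [Iy [By Cy]]]] [z [-> [Iz [Bz Cz]]]];
      simpl; intros Hxy Hyz.
    assert (HN : 0 < INR (S n)) by (apply lt_0_INR; lia).
    set (N := INR (S n)) in *.
    assert (Hw : forall u v, (INR p - INR q) / N <= u <= (INR p - INR q + 1) / N ->
              (INR p - INR q) / N <= v <= (INR p - INR q + 1) / N ->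
              Rabs (v - u) < 2 / N).
    { intros u v Hu Hv.
      assert (E : (INR p - INR q + 1) / N = (INR p - INR q) / N + 1 / N) by (field; lra).
      assert (0 < 1 / N) by (apply Rdiv_lt_0_compat; lra).
      assert (E2 : 2 / N = 1 / N + 1 / N) by (field; lra).
      rewrite E in Hu, Hv. rewrite E2. apply Rabs_def1; lra. }
    pose proof (Cx y Iy ltac:(lra) (Hw _ _ Bx By)) as H1.
    pose proof (Cy z Iz ltac:(lra) (Hw _ _ By Bz)) as H2.
    pose proof (key _ _ _ _ _ _ _ Hxy Hyz H1 H2) as K.
    unfold dist2; simpl.
    assert (0 <= (y - z) ^ 2 + (f y - f z) ^ 2) by (apply Rplus_le_le_0_compat; apply pow2_ge_0).
    assert (0 <= (x - y) ^ 2 + (f x - f y) ^ 2) by (apply Rplus_le_le_0_compat; apply pow2_ge_0).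
    apply Rmax_lub; apply sqrt_le_1_alt.
    + replace ((x - z) ^ 2 + (f x - f z) ^ 2) with
        ((x - y) ^ 2 + (f x - f y) ^ 2 + ((y - z) ^ 2 + (f y - f z) ^ 2)
         + 2 * ((y - x) * (z - y) + (f y - f x) * (f z - f y))) by ring. lra.
    + replace ((x - z) ^ 2 + (f x - f z) ^ 2) with
        ((x - y) ^ 2 + (f x - f y) ^ 2 + ((y - z) ^ 2 + (f y - f z) ^ 2)
         + 2 * ((y - x) * (z - y) + (f y - f x) * (f z - f y))) by ring. lra.
Qed.

Lemma int_as_nat (z : Z) : exists p q : nat, INR p - INR q = IZR z.
Proof.
  destruct (Z_le_gt_dec 0 z).
  - exists (Z.to_nat z), 0%nat. rewrite INR_IZR_INZ, Z2Nat.id by lia. simpl; lra.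
  - exists 0%nat, (Z.to_nat (- z)). rewrite (INR_IZR_INZ (Z.to_nat _)), Z2Nat.id by lia.
    rewrite opp_IZR. simpl; lra.
Qed.

Lemma deriv_in I f x : has_derivative_ext I f x ->
  exists k n p q, Sset I f k n p q (x, f x).
Proof.
  intros [Ix [l Hl]].
  assert (Hk : exists k (eps : posreal), forall y, I y -> y <> x -> Rabs (y - x) < eps ->
             cond k ((f y - f x) / (y - x))).
  { assert (G : forall k P, Rbar_locally l P -> (forall v, P v -> cond k v) ->
              exists (eps : posreal), forall y, I y -> y <> x -> Rabs (y - x) < eps ->
              cond k ((f y - f x) / (y - x))).
    { intros k P HP HPk. destruct (Hl P HP) as [eps Heps].
      exists eps. intros y Iy Hy Hr. apply HPk. apply (Heps y Hr). split; auto. }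
    destruct l as [r| |].
    - destruct (Rtotal_order r 0) as [Hr|[Hr|Hr]].
      + exists 1%nat. apply (G 1%nat (fun v => v < 0)); [|simpl; intros; lra].
        exists (mkposreal (- r) ltac:(lra)). intros v Hv.
        change (Rabs (v - r) < - r) in Hv. apply Rabs_def2 in Hv. lra.
      + exists 2%nat. apply (G 2%nat (fun v => Rabs v < 1)); [|simpl; intros; lra].
        exists (mkposreal 1 ltac:(lra)). intros v Hv.
        change (Rabs (v - r) < 1) in Hv. subst r. rewrite Rminus_0_r in Hv. exact Hv.
      + exists 0%nat. apply (G 0%nat (fun v => 0 < v)); [|simpl; intros; lra].
        exists (mkposreal r ltac:(lra)). intros v Hv.
        change (Rabs (v - r) < r) in Hv. apply Rabs_def2 in Hv. lra.
    - exists 0%nat. apply (G 0%nat (fun v => 0 < v)); [|simpl; intros; lra].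
      exists 0. intros; lra.
    - exists 1%nat. apply (G 1%nat (fun v => v < 0)); [|simpl; intros; lra].
      exists 0. intros; lra. }
  destruct Hk as [k [eps Heps]].
  destruct (archimed_cor1 (eps / 2)) as [M [HM HM0]].
  { destruct eps; simpl; lra. }
  destruct M as [|n]; [lia|].
  assert (HN : 0 < INR (S n)) by (apply lt_0_INR; lia).
  set (N := INR (S n)) in *.
  destruct (archimed (x * N)) as [A1 A2].
  destruct (int_as_nat (up (x * N) - 1)) as [p [q Hpq]].
  exists k, n, p, q, x. split; [reflexivity|]. split; [exact Ix|].
  fold N. rewrite Hpq, minus_IZR. split; [split|].
  - apply (Rmult_le_reg_r N); [lra|]. unfold Rdiv; rewrite Rmult_assoc, Rinv_l by lra. lra.
  - apply (Rmult_le_reg_r N); [lra|]. unfold Rdiv; rewrite Rmult_assoc, Rinv_l by lra. lra.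
  - intros y Iy Hy Hr. apply Heps; auto.
    assert (2 / N < eps); [|lra].
    replace (2 / N) with (2 * / N) by (unfold Rdiv; ring). lra.
Qed.

Definition dec (m : nat) : nat * nat * nat * nat :=
  let (k, r) := Cantor.of_nat m in
  let (n, r2) := Cantor.of_nat r in
  let (p, q) := Cantor.of_nat r2 in (k, n, p, q).

Theorem corollary6p4 (I : R -> Prop) (f : R -> R) :
  is_interval I -> nondegenerate I -> continuous_on I f ->
  exists S : nat -> (R * R -> Prop),
    (forall n, sym_1_monotone (S n)) /\
    (forall x, has_derivative_ext I f x -> exists n, S n (x, f x)).
Proof.
  intros _ _ _.
  exists (fun m => match dec m with (k, n, p, q) => Sset I f k n p q end).
  split.
  - intros m. destruct (dec m) as [[[k n] p] q]. apply Sset_mono.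
  - intros x Hx. destruct (deriv_in I f x Hx) as [k [n [p [q H]]]].
    exists (Cantor.to_nat (k, Cantor.to_nat (n, Cantor.to_nat (p, q)))).
    unfold dec. rewrite !cancel_of_to. exact H.
Qed.
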